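(* Let $p,q,r$ be distinct primes. Suppose $S$ is a numerical semigroup which is cyclotomic of depth $pqr$ and height $1$. Then $S$ is one of $\langle pr,q\rangle$, $\langle qp,r\rangle$, $\langle rq,p\rangle$.
   Context: A numerical semigroup is a submonoid $S$ of $(\mathbb N,+)$ with $\mathbb N\setminus S$ finite; $\langle a,b\rangle$ denotes the submonoid generated by $a,b$. $\mathrm P_S(x)=(1-x)\sum_{s\in S}x^s$. $S$ is cyclotomic if $\mathrm P_S$ has all complex roots in the closed unit disc. $S$ is cyclotomic of depth $d$ and height $h$ if $\mathrm P_S(x)\mid (x^d-1)^h$ with $d,h$ chosen minimally, that is, $\mathrm P_S(x)$ does not divide $(x^n-1)^{h-1}$ for any $n$, and does not divide $(x^{d'}-1)^h$ for any divisor $d'<d$ of $d$. *)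

(* Defs.v *)
From HB Require Import structures.
From mathcomp Require Import all_boot all_order all_algebra.
Set Implicit Arguments. Unset Strict Implicit. Unset Printing Implicit Defensive.
Import Order.TTheory GRing.Theory Num.Theory.

Definition numerical_semigroup (S : pred nat) : Prop :=
  [/\ 0 \in S,
      (forall a b, a \in S -> b \in S -> a + b \in S)
    & exists N, forall n, N <= n -> n \in S].

Definition gen2 (a b : nat) : pred nat :=
  fun n => [exists i : 'I_n.+1, exists j : 'I_n.+1, n == i * a + j * b].

Local Open Scope ring_scope.

(* P_S(x) = (1-x) sum_{s in S} x^s, computed with a bound N such that every
   n >= N lies in S:  (1-x) sum_{s in S, s<N} x^s + (1-x) sum_{s>=N} x^s
   = (1-x) sum_{s in S, s<N} x^s + x^N.  (Independent of the choice of N.) *)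
Definition semigroup_poly (S : pred nat) (N : nat) : {poly int} :=
  (1 - 'X) * (\sum_(s < N | S s) 'X^s) + 'X^N.

Definition cyclotomic_depth_height (S : pred nat) (N d h : nat) : Prop :=
  let P := semigroup_poly S N in
  [/\ (0 < d)%N, (0 < h)%N,
      P %| ('X^d - 1) ^+ h,
      (forall n : nat, (0 < n)%N -> ~~ (P %| ('X^n - 1) ^+ h.-1))
    & (forall d' : nat, (d' %| d)%N -> (d' < d)%N -> ~~ (P %| ('X^d' - 1) ^+ h))].

(* Main.v *)
Require Import Defs.
From mathcomp Require Import all_boot all_order all_algebra all_field.
From mathcomp Require Import zify ring lra.
Set Implicit Arguments. Unset Strict Implicit. Unset Printing Implicit Defensive.
Import Order.TTheory GRing.Theory Num.Theory.

Lemma gen2P a b n : 0 < a -> 0 < b ->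
  reflect (exists i j, n = i * a + j * b) (n \in gen2 a b).
Proof.
move=> a0 b0; rewrite unfold_in /gen2; apply: (iffP existsP).
  by case=> i /existsP [j /eqP ->]; exists i, j.
case=> i [j Dn].
have hi : i < n.+1 by rewrite ltnS Dn; apply: leq_trans (leq_addr _ _); rewrite leq_pmulr.
have hj : j < n.+1 by rewrite ltnS Dn; apply: leq_trans (leq_addl _ _); rewrite leq_pmulr.
exists (Ordinal hi); apply/existsP; exists (Ordinal hj); exact/eqP.
Qed.

Lemma gen2_add a b m n : 0 < a -> 0 < b -> m \in gen2 a b -> n \in gen2 a b ->
  m + n \in gen2 a b.
Proof.
move=> a0 b0 /(gen2P _ a0 b0) [i [j ->]] /(gen2P _ a0 b0) [k [l ->]].
apply/(gen2P _ a0 b0); exists (i + k), (j + l); rewrite !mulnDl; lia.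
Qed.

Lemma gen2_a a b : 0 < a -> 0 < b -> a \in gen2 a b.
Proof. by move=> a0 b0; apply/(gen2P _ a0 b0); exists 1, 0; rewrite mul1n addn0. Qed.
Lemma gen2_b a b : 0 < a -> 0 < b -> b \in gen2 a b.
Proof. by move=> a0 b0; apply/(gen2P _ a0 b0); exists 0, 1; rewrite mul1n. Qed.
Lemma gen2_0 a b : 0 < a -> 0 < b -> 0 \in gen2 a b.
Proof. by move=> a0 b0; apply/(gen2P _ a0 b0); exists 0, 0. Qed.
Lemma gen2_ab a b : 0 < a -> 0 < b -> a * b \in gen2 a b.
Proof. by move=> a0 b0; apply/(gen2P _ a0 b0); exists b, 0; rewrite mulnC addn0. Qed.

Section SPart.
Local Open Scope ring_scope.

Definition hh (S : pred nat) k : int := if k \in S then 1 else 0.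
Definition DD (f : nat -> int) k : int := f k - (if k is k'.+1 then f k' else 0).
Definition sh (f : nat -> int) s k : int := if (k < s)%N then 0 else f (k - s)%N.

Lemma sumA (S : pred nat) N k :
  \sum_(s < N | S s) ((k == (s : nat))%:R : int) = if (k < N)%N && S k then 1 else 0.
Proof.
case: ltnP => hk /=; last first.
  by rewrite big1 // => i _; rewrite (gtn_eqF (leq_trans (ltn_ord i) hk)).
case Sk: (S k); last first.
  by rewrite big1 // => i Si; case: eqP => // Dk; rewrite Dk Si in Sk.
rewrite (bigD1 (Ordinal hk)) //= eqxx big1 ?addr0 // => i /andP [_ ne].
by case: eqP => // Dk; case/eqP: ne; apply: val_inj.
Qed.

Lemma coefA (S : pred nat) N k :
  (\sum_(s < N | S s) 'X^s : {poly int})`_k = if (k < N)%N && S k then 1 else 0.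
Proof. by rewrite coef_sum; under eq_bigr do rewrite coefXn; rewrite sumA. Qed.

Lemma coefP (S : pred nat) N k : numerical_semigroup S -> (forall n, (N <= n)%N -> n \in S) ->
  (semigroup_poly S N)`_k = DD (hh S) k.
Proof.
case=> S0 _ _ HN.
rewrite /semigroup_poly coefD coefXn mulrBl mul1r coefB coefXM !coefA /DD /hh.
have inS m : (N <= m)%N -> m \in S = true by move=> /HN.
have mS m : S m = (m \in S) by [].
case: (ltngtP k N) => hk; rewrite !mS.
- case: k hk => [|k] hk /=; first by rewrite S0 subr0 addr0.
  by rewrite (ltnW hk) /=; case: (k.+1 \in S); case: (k \in S).
- rewrite inS ?(ltnW hk) //; case: k hk => [|k] //= hk.
  have hk' : (N <= k)%N by []. rewrite ltnNge hk' /= inS //.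
- subst k; rewrite inS //; case: N {HN inS} => [|N] /=; first by rewrite subr0 add0r.
  by rewrite ltnSn /=; case: (N \in S) => /=; lia.
Qed.



Lemma DD_sh f s k : (if (k < s)%N then 0 else DD f (k - s)) = DD (sh f s) k.
Proof.
rewrite /DD /sh; case: (ltnP k s) => ks.
  case: k ks => [|k] ks /=; first by rewrite subr0.
  by rewrite (ltnW ks) subr0.
case: k ks => [|k] ks /=; first by rewrite subr0.
case: (ltnP k s) => ks'.
  have -> : (k.+1 - s = 0)%N by lia.
  by rewrite /= !subr0.
by have -> : (k.+1 - s = (k - s).+1)%N by lia.
Qed.

Lemma mulS (S : pred nat) a i : numerical_semigroup S -> a \in S -> (i * a)%N \in S.
Proof.
case=> S0 Sadd _ Sa; elim: i => [|i IH]; first by rewrite mul0n.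
by rewrite mulSn; apply: Sadd.
Qed.

Lemma sh0 (S : pred nat) s k : ~~ ((s <= k)%N && ((k - s)%N \in S)) -> sh (hh S) s k = 0.
Proof. by rewrite /sh /hh; case: ltnP => //= _ /negPf ->. Qed.

Lemma sh_ge0 (S : pred nat) s k : 0 <= sh (hh S) s k.
Proof. by rewrite /sh /hh; case: ltnP => //; case: (_ \in S). Qed.

Lemma main_S (S : pred nat) N a b : numerical_semigroup S ->
  (forall n, (N <= n)%N -> n \in S) -> (1 < a)%N -> (1 < b)%N ->
  semigroup_poly S N * ('X^a - 1) * ('X^b - 1) = ('X - 1) * ('X^(a*b) - 1) ->
  S =i gen2 a b.
Proof.
move=> nsS HN a1 b1 H.
have a0 : (0 < a)%N by lia.
have b0 : (0 < b)%N by lia.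
have nsS' := nsS; case: nsS' => S0 Sadd _.
set P := semigroup_poly S N in H.
have cP k : P`_k = DD (hh S) k by exact: coefP.
clearbody P.
have E : P * 'X^(a + b) - P * 'X^a - P * 'X^b + P =
         'X^((a * b).+1) - 'X^(a * b) - 'X + 1.
  transitivity (P * ('X^a - 1) * ('X^b - 1)); first by rewrite exprD; ring.
  by rewrite H exprS; ring.
pose u k := hh S k - sh (hh S) a k - sh (hh S) b k + sh (hh S) (a + b) k.
pose dl k : int := (k == 0)%N%:R - (k == a * b)%N%:R.
have Hu k : DD u k = DD dl k.
  have := congr1 (fun p : {poly int} => p`_k) E.
  rewrite /= !coefD !coefN !coefMXn !coefXn coefX coef1 !cP !DD_sh.
  move=> E'; rewrite /DD /u /dl in E' *; case: k E' => [|k] /=; rewrite ?eqSS;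
  match goal with |- ?C = ?D -> ?A = ?B =>
    move=> h; have e : A - B = C - D by ring end;
  by apply/eqP; rewrite -subr_eq0 e h subrr.
have Hu' k : u k = dl k.
  elim: k => [|k IH]; first by have := Hu 0%N; rewrite /DD !subr0.
  by have := Hu k.+1; rewrite /DD IH => /addIr.
have hhS k : hh S k = 1 -> k \in S by rewrite /hh; case: (k \in S).
have hhS' k : k \in S -> hh S k = 1 by rewrite /hh => ->.
have Sa : a \in S.
  have := Hu' a; rewrite /u /dl /sh ltnn subnn (hhS' 0%N S0).
  have -> : (a < a + b)%N = true by lia.
  have -> : (a == 0)%N = false by lia.
  have -> : (a == a * b)%N = false by nia.
  rewrite /hh; case: (a \in S) => //; case: ifP => _; last case: (_ \in S); lia.
have Sb : b \in S.
  have := Hu' b; rewrite /u /dl /sh ltnn subnn (hhS' 0%N S0).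
  have -> : (b < a + b)%N = true by lia.
  have -> : (b == 0)%N = false by lia.
  have -> : (b == a * b)%N = false by nia.
  rewrite /hh; case: (b \in S) => //; case: ifP => _; last case: (_ \in S); lia.
move=> k; apply/idP/idP; last first.
  case/(gen2P _ a0 b0) => i [j ->]; apply: Sadd; exact: mulS.
elim/ltn_ind: k => k IH Sk.
have [->|k0] := eqVneq k 0%N; first exact: gen2_0.
have [->|kab] := eqVneq k (a * b)%N; first exact: gen2_ab.
have [ha|ha] := boolP ((a <= k)%N && ((k - a)%N \in S)).
  case/andP: ha => ak /IH Ska; rewrite -(subnK ak); apply: gen2_add => //.
    by apply: Ska; lia.
  exact: gen2_a.
have [hb|hb] := boolP ((b <= k)%N && ((k - b)%N \in S)).
  case/andP: hb => bk /IH Skb; rewrite -(subnK bk); apply: gen2_add => //.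
    by apply: Skb; lia.
  exact: gen2_b.
have := Hu' k; rewrite /u /dl (sh0 ha) (sh0 hb) hhS' // (negPf k0) (negPf kab).
have := sh_ge0 S (a + b) k; lia.
Qed.
End SPart.

Lemma divisors_pm p m : prime p -> 0 < m -> ~~ (p %| m) ->
  perm_eq (divisors (p * m)) (divisors m ++ map (muln p) (divisors m)).
Proof.
move=> pp m0 npm; have p0 := prime_gt0 pp.
apply: uniq_perm.
- exact: divisors_uniq.
- rewrite cat_uniq divisors_uniq (map_inj_uniq (f := muln p)) ?divisors_uniq ?andbT /=.
    apply/hasPn => x /mapP [d dm ->]; rewrite -dvdn_divisors //; apply/negP => pdm.
    by case/negP: npm; apply: dvdn_trans pdm; apply: dvdn_mulr.
  by move=> x y /eqP; rewrite eqn_pmul2l // => /eqP.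
move=> d; rewrite mem_cat -!dvdn_divisors ?muln_gt0 ?p0 //; apply/idP/idP.
- move=> dpm; case pd: (p %| d).
    apply/orP; right; apply/mapP; exists (d %/ p); last by rewrite mulnC divnK.
    by rewrite -dvdn_divisors // -(dvdn_pmul2l p0) mulnC divnK.
  apply/orP; left; rewrite -(Gauss_dvdr _ (n := p)) //.
  by rewrite coprime_sym prime_coprime // pd.
- case/orP => [dm | /mapP [e em ->]]; first exact: dvdn_mull.
  by rewrite dvdn_pmul2l // dvdn_divisors.
Qed.

Section Prods.
Local Open Scope ring_scope.
Variable R : comNzRingType.
Implicit Type F : nat -> R.

Lemma prod_div_prime F p m : prime p -> (0 < m)%N -> ~~ (p %| m)%N ->
  \prod_(d <- divisors (p * m)) F d =
  (\prod_(d <- divisors m) F d) * \prod_(d <- divisors m) F (p * d)%N.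
Proof. by move=> pp m0 npm; rewrite (perm_big _ (divisors_pm pp m0 npm)) big_cat big_map. Qed.

Lemma prod2 F p : prime p -> \prod_(d <- divisors p) F d = F 1%N * F p.
Proof.
move=> pp; have np1 : ~~ (p %| 1)%N by rewrite dvdn1 neq_ltn prime_gt1 ?orbT.
have := prod_div_prime F pp (isT : (0 < 1)%N) np1.
by rewrite muln1 => ->; rewrite !big_seq1 muln1.
Qed.

Lemma prod4 F x y : prime x -> prime y -> x != y ->
  \prod_(d <- divisors (x * y)) F d = F 1%N * F x * F y * F (x * y)%N.
Proof.
move=> px py xy.
rewrite prod_div_prime ?prime_gt0 //; last by rewrite dvdn_prime2.
by rewrite !prod2 // !muln1; ring.
Qed.

Lemma prod8 F x y z : prime x -> prime y -> prime z -> x != y -> y != z -> x != z ->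
  \prod_(d <- divisors (x * y * z)) F d =
  F 1%N * F x * F y * F z * F (x * y)%N * F (x * z)%N * F (y * z)%N * F (x * y * z)%N.
Proof.
move=> px py pz xy yz xz.
rewrite -mulnA prod_div_prime ?muln_gt0 ?prime_gt0 //; last first.
  by rewrite Euclid_dvdM // !dvdn_prime2 // (negPf xy) (negPf xz).
rewrite !prod4 // !muln1 !mulnA; ring.
Qed.
End Prods.

Section Phi.
Local Open Scope ring_scope.

Lemma Phi1 : 'Phi_1 = 'X - 1.
Proof.
have := prod_Cyclotomic (isT : (0 < 1)%N).
by rewrite (_ : divisors 1 = [:: 1%N]) // big_seq1 expr1.
Qed.

Lemma XP x : prime x -> 'X^x - 1 = ('X - 1) * 'Phi_x.
Proof. by move=> px; rewrite -prod_Cyclotomic ?prime_gt0 // prod2 // Phi1. Qed.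

Lemma XPQ x y : prime x -> prime y -> x != y ->
  'X^(x * y) - 1 = ('X - 1) * 'Phi_x * 'Phi_y * 'Phi_(x * y).
Proof. by move=> px py xy; rewrite -prod_Cyclotomic ?muln_gt0 ?prime_gt0 // prod4 // Phi1. Qed.

Lemma XPQR x y z : prime x -> prime y -> prime z -> x != y -> y != z -> x != z ->
  'X^(x * y * z) - 1 = ('X - 1) * 'Phi_x * 'Phi_y * 'Phi_z * 'Phi_(x * y) * 'Phi_(x * z)
     * 'Phi_(y * z) * 'Phi_(x * y * z).
Proof. by move=> *; rewrite -prod_Cyclotomic ?muln_gt0 ?prime_gt0 // prod8 // Phi1. Qed.

Lemma coef1M (f g : {poly int}) : (f * g)`_1 = f`_0 * g`_1 + f`_1 * g`_0.
Proof. by rewrite coefM big_ord_recr big_ord1 /= addrC. Qed.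

Lemma cXn0 m : (0 < m)%N -> ('X^m - 1 : {poly int})`_0 = -1.
Proof. by move=> m0; rewrite coefB coefXn coef1 eq_sym gtn_eqF // sub0r. Qed.

Lemma cXn1 m : (1 < m)%N -> ('X^m - 1 : {poly int})`_1 = 0.
Proof. by move=> m1; rewrite coefB coefXn coef1 eq_sym gtn_eqF // subr0. Qed.

Lemma cX1_0 : ('X - 1 : {poly int})`_0 = -1.
Proof. by rewrite coefB coefX coef1 sub0r. Qed.
Lemma cX1_1 : ('X - 1 : {poly int})`_1 = 1.
Proof. by rewrite coefB coefX coef1 subr0. Qed.

Lemma PhiP_c x : prime x -> 'Phi_x`_0 = 1 /\ 'Phi_x`_1 = 1.
Proof.
move=> px; have x1 := prime_gt1 px.
have h0 := congr1 (fun f : {poly int} => f`_0) (XP px).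
have h1 := congr1 (fun f : {poly int} => f`_1) (XP px).
rewrite /= coef0M coef1M cXn0 ?cXn1 ?cX1_0 ?cX1_1 // 1?ltnW // in h0 h1.
move: h0 h1; rewrite !mulN1r !mul1r; set u := ('Phi_x)`_0; set v := ('Phi_x)`_1.
move=> h0 h1. split; lia.
Qed.

Lemma PhiP_1 x : prime x -> ('Phi_x).[1] = x%:R.
Proof.
move=> px; have := XP px; rewrite subrX1 => /mulfI.
rewrite -polyC1 polyXsubC_eq0 => /(_ isT) <-.
by rewrite horner_sum; under eq_bigr do rewrite hornerXn expr1n; rewrite sumr_const card_ord.
Qed.

Lemma PhiPQ_c x y : prime x -> prime y -> x != y ->
  'Phi_(x * y)`_0 = 1 /\ 'Phi_(x * y)`_1 = -1.
Proof.
move=> px py xy; have x1 := prime_gt1 px; have y1 := prime_gt1 py.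
have [a0 a1] := PhiP_c px; have [b0 b1] := PhiP_c py.
have h0 := congr1 (fun f : {poly int} => f`_0) (XPQ px py xy).
have h1 := congr1 (fun f : {poly int} => f`_1) (XPQ px py xy).
rewrite /= !coef0M !coef1M !coef0M cXn0 ?cXn1 ?cX1_0 ?cX1_1 ?a0 ?a1 ?b0 ?b1 in h0 h1.
move: h0 h1; rewrite ?mulN1r ?mul1r ?mulr1 ?mulrN1 ?opprK => h0 h1.
  set u := ('Phi_(x * y))`_0 in h0 h1 *; set v := ('Phi_(x * y))`_1 in h0 h1 *. split; lia. all: nia.
Qed.

Lemma PhiPQR_c x y z : prime x -> prime y -> prime z -> x != y -> y != z -> x != z ->
  'Phi_(x * y * z)`_0 = 1 /\ 'Phi_(x * y * z)`_1 = 1.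
Proof.
move=> px py pz xy yz xz; have x1 := prime_gt1 px; have y1 := prime_gt1 py; have z1 := prime_gt1 pz.
have [a0 a1] := PhiP_c px; have [b0 b1] := PhiP_c py; have [c0 c1] := PhiP_c pz.
have [d0 d1] := PhiPQ_c px py xy; have [e0 e1] := PhiPQ_c px pz xz; have [f0 f1] := PhiPQ_c py pz yz.
have h0 := congr1 (fun f : {poly int} => f`_0) (XPQR px py pz xy yz xz).
have h1 := congr1 (fun f : {poly int} => f`_1) (XPQR px py pz xy yz xz).
rewrite /= !coef0M !coef1M !coef0M cXn0 ?cXn1 ?cX1_0 ?cX1_1 ?a0 ?a1 ?b0 ?b1 ?c0 ?c1 ?d0 ?d1 ?e0 ?e1 ?f0 ?f1 in h0 h1.
move: h0 h1; rewrite ?mulN1r ?mul1r ?mulr1 ?mulrN1 ?opprK => h0 h1.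
  set u := ('Phi_(x * y * z))`_0 in h0 h1 *; set v := ('Phi_(x * y * z))`_1 in h0 h1 *. split; lia. all: nia.
Qed.
End Phi.

Section Struct.
Local Open Scope ring_scope.
Local Notation pZtoC := (map_poly (intr : int -> algC)).
Local Notation pZtoQ := (map_poly (intr : int -> rat)).
Local Notation pQtoC := (map_poly (ratr : rat -> algC)).

Lemma pZQC (P : {poly int}) : pQtoC (pZtoQ P) = pZtoC P.
Proof. by rewrite -map_poly_comp; apply: eq_map_poly => x /=; rewrite rmorph_int. Qed.

Lemma dich d (P : {poly int}) : (0 < d)%N -> ~~ (pZtoC 'Phi_d %| pZtoC P) ->
  coprimep (pZtoC 'Phi_d) (pZtoC P).
Proof.
move=> d0 nd; apply: Pdiv.ClosedField.root_coprimep => x rx.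
apply: contra nd => /eqP Px.
have [z pz] := C_prim_root_exists d0.
have px : d.-primitive_root x by rewrite -(root_cyclotomic pz) -(Cintr_Cyclotomic pz).
have [pf [Dpf _] Hpf] := minCpolyP x.
rewrite (Cintr_Cyclotomic px) -(minCpoly_cyclotomic px) Dpf -pZQC dvdp_map -Hpf pZQC.
by apply/rootP.
Qed.

Lemma dvdp_prod_sep (s : seq nat) (G : nat -> {poly algC}) Q :
  separable_poly (\prod_(i <- s) G i) -> (forall i, i \in s -> G i %| Q) ->
  \prod_(i <- s) G i %| Q.
Proof.
elim: s => [|i s IH] sep H; first by rewrite big_nil dvd1p.
rewrite big_cons; rewrite big_cons in sep; move: sep; rewrite separable_mul => /and3P [_ sep2 cop].
rewrite Gauss_dvdp // H ?mem_head // IH // => j js; first (apply: H; rewrite inE js orbT). done.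
Qed.

Lemma coprimep_prod (s : seq nat) (G : nat -> {poly algC}) Q :
  (forall i, i \in s -> coprimep Q (G i)) -> coprimep Q (\prod_(i <- s) G i).
Proof.
elim: s => [|i s IH] H; first by rewrite big_nil coprimep1.
rewrite big_cons coprimepMr H ?mem_head // IH // => j js; first (apply: H; rewrite inE js orbT). done.
Qed.

Definition bC (P : {poly int}) d := pZtoC 'Phi_d %| pZtoC P.

Lemma structure (P : {poly int}) (D : seq nat) n : (0 < n)%N ->
  (forall d, d \in D -> (0 < d)%N) -> \prod_(d <- D) 'Phi_d = 'X^n - 1 ->
  P %| 'X^n - 1 ->
  pZtoC P %= pZtoC (\prod_(d <- D) (if bC P d then 'Phi_d else 1)).
Proof.
move=> n0 hD XD PX.
set T := \prod_(d <- D) _.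
pose U := \prod_(d <- D) (if bC P d then 1 else 'Phi_d).
have TU : pZtoC T * pZtoC U = 'X^n - 1.
  rewrite -rmorphM -big_split /=.
  rewrite (eq_bigr (fun d => 'Phi_d)) ?XD; last by move=> d _; case: ifP; rewrite ?mulr1 ?mul1r.
  by rewrite rmorphB rmorph1 /= map_polyXn.
have sep : separable_poly ('X^n - 1 : {poly algC}).
  by apply: separable_Xn_sub_1; rewrite pnatr_eq0 -lt0n.
rewrite -TU separable_mul in sep; case/and3P: sep => sT sU cTU.
have PXC : pZtoC P %| 'X^n - 1.
  have -> : ('X^n - 1 : {poly algC}) = pZtoC ('X^n - 1) by rewrite rmorphB rmorph1 /= map_polyXn.
  by rewrite -!pZQC dvdp_map dvdp_rat_int.
apply/andP; split.
  have cPU : coprimep (pZtoC P) (pZtoC U).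
    rewrite /U rmorph_prod; apply: coprimep_prod => d dD.
    case: ifP => bd; first by rewrite rmorph1 coprimep1.
    by rewrite coprimep_sym; apply: dich; [exact: hD | rewrite /bC in bd; rewrite bd].
  by rewrite -(Gauss_dvdpl _ cPU) TU.
move: sT; rewrite /T !rmorph_prod => sT; apply: dvdp_prod_sep => // d dD.
by case: ifP => bd; rewrite ?rmorph1 ?dvd1p.
Qed.
End Struct.

Section Main.
Local Open Scope ring_scope.
Local Notation pZtoC := (map_poly (intr : int -> algC)).

Lemma hC0 (p : {poly int}) : (pZtoC p).[0] = (p.[0])%:~R.
Proof. by rewrite !horner_coef0 coef_map. Qed.

Lemma hC1 (p : {poly int}) : (pZtoC p).[1] = (p.[1])%:~R.
Proof. by have := horner_map (intr : int -> algC) p 1; rewrite rmorph1. Qed.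

Lemma gv (b : bool) (f : {poly int}) x : (if b then f else 1).[x] = if b then f.[x] else 1.
Proof. by case: b; rewrite // -polyC1 hornerC. Qed.

Lemma gc (b : bool) (f : {poly int}) k : (if b then f else 1)`_k = if b then f`_k else (k == 0)%N%:R.
Proof. by case: b; rewrite // coef1. Qed.

Lemma no_unit (x : nat) (y : int) : (1 < x)%N -> x%:R * y = 1 -> False.
Proof. move=> x1 /(congr1 absz); rewrite abszM natz /= => /eqP; rewrite muln_eq1 => /andP [/eqP x1e _]; by rewrite x1e in x1. Qed.

Lemma answer (S : pred nat) N x y z : prime x -> prime y -> prime z ->
  x != y -> y != z -> x != z -> numerical_semigroup S ->
  (forall n, (N <= n)%N -> n \in S) ->
  semigroup_poly S N = 'Phi_(x * z) * ('Phi_(y * z) * 'Phi_(x * y * z)) ->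
  S =i gen2 (x * y) z.
Proof.
move=> px py pz xy yz xz nsS HN HP.
have x1 := prime_gt1 px; have y1 := prime_gt1 py; have z1 := prime_gt1 pz.
apply: (main_S nsS HN) => //; first by nia.
by rewrite HP XPQR // XPQ // XP //; ring.
Qed.

Lemma PhiPQ_dvd x y : prime x -> prime y -> x != y -> 'Phi_(x * y) %| 'X^(x * y) - 1.
Proof. by move=> px py xy; rewrite XPQ // dvdp_mull. Qed.

End Main.

Unset Implicit Arguments.
Theorem theorem2 (p q r : nat) (S : pred nat) (N : nat) :
  prime p -> prime q -> prime r -> p != q -> q != r -> p != r ->
  numerical_semigroup S ->
  (forall n, N <= n -> n \in S) ->
  cyclotomic_depth_height S N (p * q * r) 1 ->
  [\/ S =i gen2 (p * r) q, S =i gen2 (q * p) r | S =i gen2 (r * q) p].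
Proof.
move=> pp pq pr npq nqr npr nsS HN.
rewrite /cyclotomic_depth_height => -[n0 _ Pd Hn Hd].
have p1 := prime_gt1 pp; have q1 := prime_gt1 pq; have r1 := prime_gt1 pr.
have ltpq : p * q < p * q * r by nia.
have ltpr : p * r < p * q * r by nia.
have ltqr : q * r < p * q * r by nia.
have e3 : (r * q * p = p * q * r)%N by rewrite mulnC [(r * q)%N]mulnC mulnA.
set P := semigroup_poly S N in Pd Hn Hd.
have cP k : (P`_k = DD (hh S) k)%R by exact: coefP.
have nsS' := nsS; case: nsS' => S0 Sadd _.
have S1 : 1 \notin S.
  apply/negP => S1.
  have Sall k : k \in S by rewrite -(muln1 k); apply: mulS.
  have P1 : P = 1%R.
    apply/polyP => k; rewrite cP coef1 /DD /hh.
    by case: k => [|k]; rewrite !Sall //= subrr.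
  by move: (Hn 1 isT); rewrite expr0 P1 dvdpp.
have P0 : (P.[0] = 1)%R by rewrite horner_coef0 cP /DD /hh S0.
have Pc1 : (P`_1 = -1)%R by rewrite cP /DD /hh (negPf S1) S0 sub0r.
have Pe1 : (P.[1] = 1)%R.
  by rewrite /P /semigroup_poly hornerD hornerM hornerXn expr1n !hornerE.
pose D := [:: 1; p; q; r; p * q; p * r; q * r; p * q * r].
have hD : (\prod_(d <- D) 'Phi_d = 'X^(p * q * r) - 1)%R.
  rewrite -prod_Cyclotomic ?muln_gt0 ?prime_gt0 // prod8 //.
  by rewrite !big_cons big_nil mulr1 !mulrA.
have hDpos : forall d, d \in D -> 0 < d.
  by apply/allP; rewrite /= !muln_gt0 !prime_gt0.
rewrite expr1 in Pd.
have := structure n0 hDpos hD Pd.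
case/eqpP => -[c1 c2] /= /andP [c10 c20] Ec.
rewrite /D !big_cons big_nil mulr1 in Ec.
set b1 := bC P 1 in Ec; set bp := bC P p in Ec; set bq := bC P q in Ec;
set br := bC P r in Ec; set bpq := bC P (p * q) in Ec; set bpr := bC P (p * r) in Ec;
set bqr := bC P (q * r) in Ec; set bpqr := bC P (p * q * r) in Ec.
have gc0 (b : bool) (f : {poly int}) : ((if b then f else 1)`_0 = if b then f`_0 else 1)%R.
  by case: b; rewrite // coef1.
have gc1 (b : bool) (f : {poly int}) : ((if b then f else 1)`_1 = if b then f`_1 else 0)%R.
  by case: b; rewrite // coef1.
have hX1_1 : ((('X - 1 : {poly int})).[1] = 0)%R by rewrite -polyC1 hornerXsubC subrr.
have c0 x : prime x -> ('Phi_x).[0]%R = 1%R by move=> px; rewrite horner_coef0; case: (PhiP_c px).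
have c0pq x y : prime x -> prime y -> x != y -> ('Phi_(x * y)).[0]%R = 1%R.
  by move=> px py xy; rewrite horner_coef0; case: (PhiPQ_c px py xy).
have c0pqr : ('Phi_(p * q * r)).[0]%R = 1%R.
  by rewrite horner_coef0; case: (PhiPQR_c pp pq pr npq nqr npr).
have E0 := congr1 (fun f => f.[0]%R) Ec.
have E1 := congr1 (fun f => f.[1]%R) Ec.
rewrite /= !hornerZ !hC0 !hC1 P0 Pe1 in E0 E1.
rewrite !hornerM !gv Phi1 c0 // c0 // c0 // c0pq // c0pq // c0pq // c0pqr !if_same in E0.
rewrite !hornerM !gv Phi1 PhiP_1 // PhiP_1 // PhiP_1 // in E1.
have nb1 : b1 = false.
  apply/negbTE/negP => hb1; move: E1; rewrite hb1 hX1_1 mul0r mulr0z mulr0 => /eqP.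
  by rewrite mulf_eq0 (negPf c10) intr_eq0.
have Ecc : c1 = c2.
  move: E0; rewrite nb1 !mul1r => /mulIf; apply; by rewrite intr_eq0.
rewrite Ecc in Ec.
have PT := map_inj_poly (intr_inj : injective (intr : int -> algC)) (mulr0z 1) (scalerI c20 Ec).
clear E0 E1 Ec.
have T1 := congr1 (fun f => f.[1]%R) PT.
rewrite /= Pe1 !hornerM !gv nb1 PhiP_1 // PhiP_1 // PhiP_1 // mul1r in T1.
have nbp : bp = false.
  by apply/negbTE/negP => h; rewrite h in T1; apply: (no_unit p1 (esym T1)).
rewrite nbp mul1r in T1.
have nbq : bq = false.
  by apply/negbTE/negP => h; rewrite h in T1; apply: (no_unit q1 (esym T1)).
rewrite nbq mul1r in T1.
have nbr : br = false.
  by apply/negbTE/negP => h; rewrite h in T1; apply: (no_unit r1 (esym T1)).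
clear T1.
have C1 := congr1 (fun f : {poly int} => (f`_1)%R) PT.
have [d0 d1] := PhiPQ_c pp pq npq; have [e0 e1] := PhiPQ_c pp pr npr.
have [f0 f1] := PhiPQ_c pq pr nqr; have [g0 g1] := PhiPQR_c pp pq pr npq nqr npr.
rewrite /= Pc1 nb1 nbp nbq nbr !mul1r !coef1M !coef0M !gc0 !gc1 d0 d1 e0 e1 f0 f1 g0 g1 !if_same in C1.
rewrite nb1 nbp nbq nbr !mul1r in PT.
clearbody bpq bpr bqr bpqr.
have dpr : p * r %| p * q * r by rewrite mulnAC dvdn_mulr.
have dqr : q * r %| p * q * r by rewrite -mulnA dvdn_mull.
have nrq : r != q by rewrite eq_sym.
have nqp : q != p by rewrite eq_sym.
have nrp : r != p by rewrite eq_sym.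
move: C1 PT; case: bpq; case: bpr; case: bqr; case: bpqr => C1 PT;
  rewrite ?mul1r ?mulr1 ?mul0r ?mulr0 ?addr0 ?add0r in C1 PT; try by move/eqP: C1.
all: first
  [ by exfalso; move: (Hd (p * q) (dvdn_mulr _ (dvdnn _)) ltpq); rewrite expr1 PT PhiPQ_dvd
  | by exfalso; move: (Hd (p * r) dpr ltpr); rewrite expr1 PT PhiPQ_dvd
  | by exfalso; move: (Hd (q * r) dqr ltqr); rewrite expr1 PT PhiPQ_dvd
  | by apply: Or31; apply: (answer pp pr pq npr nrq npq nsS HN); rewrite -/P PT (mulnC r q) (mulnAC p r q)
  | by apply: Or32; apply: (answer pq pp pr nqp npr nqr nsS HN); rewrite -/P PT mulrCA (mulnC q p)
  | by apply: Or33; apply: (answer pr pq pp nrq nqp nrp nsS HN);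
       rewrite -/P PT mulrCA (mulnC r p) (mulnC q p) e3 ].
Qed.
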